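(* Let $t\in\mathbb{Z}_+$ and let agent $i$ have binary values $v_i(g)\in\{0,1\}$ and quantile $\tau_i=\frac{t}{t+1}$. Let $B\subseteq M$ be a bundle containing exactly $\ell$ items of value $1$ for $i$. Then $v_i(B)=1$ if and only if the number of items in $B$ of value $0$ for $i$ is at most $\ell t-1$.
   Context: For a nonempty bundle $S\subseteq M$, order its items as $g_1,\dots,g_{|S|}$ with $v_i(g_1)\le\dots\le v_i(g_{|S|})$; then $v_i(S)=v_i(g_{\lceil \tau_i|S|\rceil})$ if $\tau_i>0$ and $v_i(S)=v_i(g_1)$ if $\tau_i=0$. *)

(* Defs.v *)
From mathcomp Require Import all_boot all_order all_algebra.
Set Implicit Arguments. Unset Strict Implicit. Unset Printing Implicit Defensive.
Import Order.TTheory GRing.Theory Num.Theory.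
Local Open Scope ring_scope.

(* Quantile value of a nonempty bundle S for valuation v with quantile tau:
   sort the item values of S increasingly as v(g_1) <= ... <= v(g_|S|);
   return v(g_{ceil(tau |S|)}) if tau > 0 and v(g_1) if tau = 0.
   (Indices are 1-based in the paper, 0-based in nth.) *)
Definition qval (R : realDomainType) (M : finType) (v : M -> R) (tau : rat)
    (S : {set M}) : R :=
  let s := sort <=%R [seq v g | g <- enum S] in
  if tau == 0 then nth 0 s 0
  else nth 0 s (`|Num.ceil (tau * (#|S|%:R))|%N).-1.

(* Main.v *)
Require Import Defs.
From mathcomp Require Import all_boot all_order all_algebra zify.
Import Order.TTheory GRing.Theory Num.Theory.
Local Open Scope ring_scope.

Lemma card_filt (M : finType) (B : {set M}) (P : pred M) :
  #|[set g in B | P g]| = size [seq g <- enum B | P g].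
Proof.
have U : uniq [seq g <- enum B | P g] by exact/filter_uniq/enum_uniq.
rewrite -(card_uniqP U); apply: eq_card => x.
by rewrite mem_filter mem_enum !inE andbC.
Qed.

Lemma path1 (R : realDomainType) l : path <=%R (1:R) (nseq l 1).
Proof. by elim: l => //= l ->; rewrite lexx. Qed.

Lemma path0 (R : realDomainType) z l : path <=%R (0:R) (nseq z 0 ++ nseq l 1).
Proof.
elim: z => [|z IH] /=; last by rewrite lexx IH.
by case: l => //= l; rewrite ler01 path1.
Qed.

Lemma sorted01 (R : realDomainType) z l : sorted <=%R (nseq z (0:R) ++ nseq l 1).
Proof. case: z => [|z] /=; [case: l => //= l; exact: path1 | exact: path0]. Qed.

Lemma map_const (T : Type) (R : eqType) (f : T -> R) c (s : seq T) :
  all (fun x => f x == c) s -> map f s = nseq (size s) c.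
Proof. by elim: s => //= x s IH /andP[/eqP -> /IH ->]. Qed.

Theorem lemma2 (R : realDomainType) (M : finType) (v : M -> R) (t l : nat)
    (B : {set M}) :
  (0 < t)%N ->
  (forall g : M, v g = 0 \/ v g = 1) ->
  B != set0 ->
  #|[set g in B | v g == 1]| = l ->
  (qval v ((t%:R / (t.+1)%:R) : rat) B = 1 <->
   (#|[set g in B | v g == 0]|%:Z <= (l * t)%:Z - 1)).
Proof.
move=> t0 v01 B0 Hl.
set z := #|[set g in B | v g == 0]|.
have Hs : sort <=%R [seq v g | g <- enum B] = nseq z 0 ++ nseq l 1.
  apply: (sorted_eq le_trans le_anti); first exact: sort_le_sorted.
  - exact: sorted01.
  rewrite perm_sort perm_sym.
  apply: perm_trans _ (perm_map v (permEl (perm_filterC (fun g => v g == 0) (enum B)))).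
  have E1 : [seq x <- enum B | predC (fun g : M => v g == 0) x] = [seq x <- enum B | v x == 1].
    apply: eq_filter => x /=; case: (v01 x) => ->; rewrite ?eqxx //.
    by rewrite eq_sym oner_eq0.
    by rewrite oner_eq0.
  rewrite E1 map_cat /z -Hl !card_filt.
  rewrite ((@map_const _ _ _ 0)); last by apply/allP => x; rewrite mem_filter => /andP[].
  rewrite ((@map_const _ _ _ 1)) //; apply/allP => x; rewrite mem_filter => /andP[] //.
have Hn : #|B| = (z + l)%N.
  by rewrite cardE -(size_map v) -(size_sort <=%R) Hs size_cat !size_nseq.
rewrite /qval Hs.
have tau0 : ((t%:R / (t.+1)%:R) : rat) != 0.
  by rewrite mulf_neq0 // ?invr_eq0 pnatr_eq0 -?lt0n.
rewrite (negbTE tau0) Hn.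
set x := (t%:R / (t.+1)%:R : rat) * (z + l)%:R.
have xpos : 0 < x.
  by rewrite /x mulr_gt0 // ?divr_gt0 ?ltr0n // -Hn card_gt0.
have Hk : (`|Num.ceil x|%N)%:Z = Num.ceil x.
  by rewrite abszE gtr0_norm // ceil_gt0.
have Hkn : (`|Num.ceil x| <= z + l)%N.
  rewrite -lez_nat Hk ceil_le_int /x.
  rewrite -[((z + l)%N)%:~R]/((z+l)%:R : rat) mulrAC ler_pdivrMr ?ltr0n //.
  rewrite -!natrM ler_nat; nia.
have Hkz : (z < `|Num.ceil x|)%N = (z < l * t)%N.
  rewrite -ltz_nat Hk ceil_gt_int /x.
  rewrite -[(z%:Z)%:~R]/(z%:R : rat) mulrAC ltr_pdivlMr ?ltr0n //.
  rewrite -!natrM ltr_nat; apply/idP/idP; nia.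
have Hk1 : (0 < `|Num.ceil x|)%N by rewrite -ltz_nat Hk ceil_gt0.
move: Hkn Hkz Hk1; set k := `|Num.ceil x|%N => Hkn Hkz Hk1.
rewrite nth_cat size_nseq.
case: ltnP => H1.
  rewrite nth_nseq H1; split => [/eqP|]; first by rewrite eq_sym oner_eq0.
  lia.
rewrite nth_nseq; have -> : (k.-1 - z < l)%N by lia.
split => // _; lia.
Qed.
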